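(* Let $q=r^2$ with $r$ an odd prime power, $\theta$ a primitive element of $\mathbb{F}_q$, and $q-1=e_1f_1=e_2f_2$ with positive integers, where for some integer $l\geq 2$ we have $e_1\equiv 2^l\pmod{2^{l+1}}$ and $2^l\mid e_2$, and moreover $2e_2\mid e_1(r-1)$ and $e_1\mid e_2(r+1)$. Let $A=\langle\theta^{e_1}\rangle$, $B=\langle\theta^{e_2}\rangle$, $\beta=\theta^{e_2}$, $\gamma=\theta^{e_1/2}$, $D_1=\frac{e_1}{\gcd(e_1,e_2)}$, $D_2=\frac{e_2}{\gcd(e_1,e_2)}$. Let $1\leq s\leq D_1$, $1\leq t\leq D_2$, let $i_1,\dots,i_s$ be integers pairwise distinct modulo $D_1$ and $j_1,\dots,j_t$ integers pairwise distinct modulo $D_2$, and set $M=\bigcup_{\mu=1}^s\beta^{i_\mu}A$, $N=\bigcup_{\nu=1}^t\gamma^{2j_\nu+1}B$, $S=M\cup N$. Then $\eta(L_S(b))=(-1)^{\frac{(s-1)(r+1)}{2}}$ for every $b\in M$, and $\eta(L_S(b))=1$ for every $b\in N$.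
   Context: $\eta$ denotes the quadratic character of $\mathbb{F}_q^*$ ($\eta(x)=1$ if $x$ is a nonzero square, $-1$ otherwise). For a finite set $S\subseteq\mathbb{F}_q$ and $b\in S$, $L_S(b)=\prod_{c\in S,\,c\neq b}(b-c)$. $\langle x\rangle$ denotes the cyclic subgroup of $\mathbb{F}_q^*$ generated by $x$. *)

(* Defs.v *)
From mathcomp Require Import all_boot all_order all_algebra all_field.
Set Implicit Arguments. Unset Strict Implicit. Unset Printing Implicit Defensive.
Import GRing.Theory Num.Theory.
Local Open Scope ring_scope.

(* quadratic character eta of F^*, with eta 0 := 0 (never used at 0) *)
Definition eta (F : finFieldType) (x : F) : int :=
  if x == 0 then 0 else if [exists y : F, y ^+ 2 == x] then 1 else -1.

Definition LS (F : finFieldType) (S : {set F}) (b : F) : F :=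
  \prod_(c in S | c != b) (b - c).

(* cyclic subgroup <x> of F^* (as a subset of F); the order of x is < #|F| *)
Definition cycF (F : finFieldType) (x : F) : {set F} :=
  [set x ^+ (nat_of_ord k) | k : 'I_#|F|].

Definition cosetF (F : finFieldType) (y : F) (H : {set F}) : {set F} :=
  [set y * h | h in H].

(* Main.v *)
Require Import Defs.
From mathcomp Require Import all_boot all_order all_algebra all_field.
From mathcomp Require Import zify ring lra.
Import GRing.Theory Num.Theory.
Local Open Scope ring_scope.
Set Implicit Arguments. Unset Strict Implicit. Unset Printing Implicit Defensive.

Lemma coset_enum (F : finFieldType) (z y : F) (f : nat) :
  f.-primitive_root z -> (f <= #|F|)%N ->
  cosetF y (cycF z) = [set y * z ^+ (nat_of_ord k) | k : 'I_f].
Proof.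
move=> pz fle; have f0 := prim_order_gt0 pz.
apply/setP => c; apply/imsetP/imsetP.
- case=> h /imsetP[k _ ->] ->.
  exists (Ordinal (ltn_pmod k f0)) => //=; by rewrite prim_expr_mod.
- case=> k _ ->; exists (z ^+ k) => //.
  apply/imsetP; exists (widen_ord fle k) => //.
Qed.

Lemma coset_inj {F : finFieldType} (z y : F) (f : nat) :
  f.-primitive_root z -> y != 0 ->
  injective (fun k : 'I_f => y * z ^+ (nat_of_ord k)).
Proof.
move=> pz y0 k1 k2 /= /(mulfI y0) /eqP.
rewrite (eq_prim_root_expr pz) !modn_small // => /eqP h.
by apply: val_inj.
Qed.

Lemma coset_prod (F : finFieldType) (z y x : F) (f : nat) :
  f.-primitive_root z -> y != 0 ->
  \prod_(c in [set y * z ^+ (nat_of_ord k) | k : 'I_f]) (x - c) = x ^+ f - y ^+ f.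
Proof.
move=> pz y0.
rewrite big_imset /=; last by move=> a b _ _ /(@coset_inj _ _ _ _ pz y0).
have := congr1 (fun p => p.[x / y]) (factor_Xn_sub_1 pz).
rewrite horner_prod big_mkord !hornerE => H.
transitivity (\prod_(k < f) (y * (x / y - z ^+ k))).
  by apply: eq_bigr => k _; rewrite mulrBr mulrCA divff // mulr1.
rewrite big_split /= prodr_const card_ord.
under eq_bigr do rewrite -[_ - _](hornerXsubC _ (x / y)).
rewrite H mulrBr exprMn mulrCA -exprMn divff // expr1n mulr1 mulr1.
by [].
Qed.

Lemma prod_one_sub (F : finFieldType) (z : F) (f : nat) :
  f.+1.-primitive_root z -> \prod_(k < f) (1 - z ^+ k.+1) = f.+1%:R.
Proof.
move=> pz; have H := factor_Xn_sub_1 pz.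
rewrite big_mkord big_ord_recl /= expr0 polyC1 subrX1 in H.
have nz : ('X - 1 : {poly F}) != 0 by rewrite -polyC1 polyXsubC_eq0.
have H2 := mulfI nz H.
have := congr1 (fun p => p.[1]) H2.
rewrite horner_prod horner_sum => H3.
transitivity (\prod_(i < f) ('X - (z ^+ bump 0 i)%:P).[1]).
  by apply: eq_bigr => k _; rewrite hornerXsubC.
rewrite H3; under eq_bigr do rewrite hornerXn expr1n.
by rewrite sumr_const card_ord.
Qed.

Lemma prim_neq0 (F : finFieldType) (z : F) (f : nat) :
  f.-primitive_root z -> z != 0.
Proof.
move=> pz; apply/eqP => z0; have := prim_expr_order pz.
by rewrite z0 expr0n eqn0Ngt (prim_order_gt0 pz) /= => /eqP; rewrite eq_sym oner_eq0.
Qed.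

Lemma coset_rebase (F : finFieldType) (z y x : F) (f : nat) :
  f.-primitive_root z -> x \in [set y * z ^+ (nat_of_ord k) | k : 'I_f] ->
  [set y * z ^+ (nat_of_ord k) | k : 'I_f] = [set x * z ^+ (nat_of_ord k) | k : 'I_f].
Proof.
move=> pz /imsetP[k0 _ ->]; have f0 := prim_order_gt0 pz.
apply/setP => c; apply/imsetP/imsetP.
- case=> k _ ->; exists (Ordinal (ltn_pmod (k + (f - k0)) f0)) => //=.
  rewrite -mulrA (prim_expr_mod pz) -exprD.
  have -> : (k0 + (k + (f - k0)) = k + f)%N by have := ltn_ord k0; lia.
  by rewrite exprD (prim_expr_order pz) mulr1.
- case=> k _ ->; exists (Ordinal (ltn_pmod (k0 + k) f0)) => //=.
  by rewrite (prim_expr_mod pz) exprD mulrA.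
Qed.

Lemma coset_self (F : finFieldType) (z y x : F) (f : nat) :
  f.-primitive_root z -> y != 0 -> x \in [set y * z ^+ (nat_of_ord k) | k : 'I_f] ->
  \prod_(c in [set y * z ^+ (nat_of_ord k) | k : 'I_f] | c != x) (x - c)
    = f%:R * x ^+ f.-1.
Proof.
move=> pz y0 hx.
have x0 : x != 0 by case/imsetP: hx => k _ ->; rewrite mulf_neq0 // expf_neq0 // (prim_neq0 pz).
rewrite (coset_rebase pz hx) big_mkcondr /=.
rewrite big_imset /=; last by move=> a b _ _ /(@coset_inj _ _ _ _ pz x0).
case: f pz {hx} => [|f] pz; first by have := prim_order_gt0 pz.
rewrite big_ord_recl /= expr0 mulr1 eqxx mul1r.
transitivity (\prod_(i < f) (x * (1 - z ^+ i.+1))).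
  apply: eq_bigr => k _.
  have -> : (x * z ^+ (bump 0 k) != x) = true.
    apply/negP => /eqP h; have : z ^+ k.+1 = 1.
      by apply: (mulfI x0); rewrite mulr1.
    move/eqP; rewrite -(prim_order_dvd pz) => /dvdn_leq; have := ltn_ord k; lia.
  by rewrite mulrBr mulr1.
by rewrite big_split /= prodr_const card_ord (prod_one_sub pz) mulrC.
Qed.

Definition Ep (F : finFieldType) (r : nat) (x : F) := x ^+ ((r - 1) * ((r + 1) %/ 2)).

Lemma n_half (r : nat) : odd r -> ((r ^ 2).-1 = 2 * ((r - 1) * ((r + 1) %/ 2)))%N.
Proof.
move=> hr; have := odd_double_half r; rewrite hr => h.
set m := r./2 in h; rewrite -!mul2n in h.
have -> : ((r + 1) %/ 2 = m + 1)%N by lia.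
rewrite expnS expn1 -h; nia.
Qed.

Lemma Ep_mul (F : finFieldType) r (x y : F) : Ep r (x * y) = Ep r x * Ep r y.
Proof. by rewrite /Ep exprMn. Qed.

Lemma Ep_exp (F : finFieldType) r (x : F) k : Ep r (x ^+ k) = Ep r x ^+ k.
Proof. by rewrite /Ep exprAC. Qed.

Lemma Ep_expz (F : finFieldType) r (x : F) (k : int) : Ep r (x ^ k) = Ep r x ^ k.
Proof. by rewrite /Ep !exprnP exprzAC. Qed.

Lemma Ep_nat_half (F : finFieldType) (r : nat) (th : F) :
  odd r -> (1 < r)%N -> ((r ^ 2).-1).-primitive_root th ->
  th ^+ ((r - 1) * ((r + 1) %/ 2)) = -1.
Proof.
move=> hr r1 pz; set N := ((r - 1) * ((r + 1) %/ 2))%N.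
have hn := n_half hr; fold N in hn.
have r3 : (3 <= r)%N by case: r hr r1 {hn N pz} => [|[|[|]]].
have N0 : (0 < N)%N.
  rewrite /N muln_gt0 subn_gt0 r1 /= divn_gt0 //; lia.
have : (th ^+ N) ^+ 2 == 1 by rewrite -exprM mulnC -hn (prim_expr_order pz).
rewrite sqrf_eq1 => /orP[|/eqP //].
by rewrite -(prim_order_dvd pz) hn => /dvdn_leq; lia.
Qed.

Lemma Ep_th (F : finFieldType) (r : nat) (th : F) m :
  odd r -> (1 < r)%N -> ((r ^ 2).-1).-primitive_root th ->
  Ep r (th ^+ m) = (-1) ^+ m.
Proof. by move=> hr r1 pz; rewrite Ep_exp /Ep (Ep_nat_half hr r1 pz). Qed.

Lemma all_pow (F : finFieldType) (r : nat) (th x : F) :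
  #|F| = (r ^ 2)%N -> ((r ^ 2).-1).-primitive_root th -> x != 0 ->
  {m : nat | x = th ^+ m}.
Proof.
move=> hq pz x0.
have h1 : x ^+ (r ^ 2).-1 = 1.
  have := expf_card x; rewrite hq.
  have : (0 < r ^ 2)%N by rewrite -hq; apply/card_gt0P; exists x.
  case: (r ^ 2)%N => // n _; rewrite exprSr /= => h.
  by apply: (mulIf x0); rewrite mul1r.
by case: (prim_rootP pz h1) => k ->; exists k.
Qed.

Lemma neg1_neq1 (F : finFieldType) (r : nat) (th : F) :
  odd r -> (1 < r)%N -> ((r ^ 2).-1).-primitive_root th -> (-1 : F) != 1.
Proof.
move=> hr r1 pz; rewrite -(Ep_nat_half hr r1 pz); set N := ((r - 1) * ((r + 1) %/ 2))%N.
have hn := n_half hr; fold N in hn.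
have r3 : (3 <= r)%N by case: r hr r1 {hn N pz} => [|[|[|]]].
have N0 : (0 < N)%N.
  rewrite /N muln_gt0 subn_gt0 r1 /= divn_gt0 //; lia.
by rewrite -(prim_order_dvd pz) hn; apply/negP => /dvdn_leq; lia.
Qed.

Lemma sign_eq (F : finFieldType) (m K : nat) : (-1 : F) != 1 ->
  (-1 : F) ^+ m = (-1) ^+ K -> odd m = odd K.
Proof.
move=> h1; rewrite -[(-1) ^+ m]signr_odd -[(-1) ^+ K]signr_odd.
case: (odd m); case: (odd K) => //= /eqP; rewrite ?expr1 ?expr0 ?(negbTE h1) //.
by rewrite eq_sym (negbTE h1).
Qed.

Lemma eta_of_E (F : finFieldType) (r : nat) (th x : F) (K : nat) :
  odd r -> (1 < r)%N -> #|F| = (r ^ 2)%N -> ((r ^ 2).-1).-primitive_root th ->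
  x != 0 -> Ep r x = (-1) ^+ K -> eta x = (-1) ^+ K.
Proof.
move=> hr r1 hq pz x0.
have m1 := neg1_neq1 hr r1 pz.
have [m xm] := all_pow hq pz x0.
rewrite xm Ep_th // => /(sign_eq m1) hK.
rewrite /eta -xm (negbTE x0) -signr_odd -hK.
case hm: (odd m).
- case: existsP => // -[y /eqP hy].
  have y0 : y != 0 by apply: contra_neq x0 => y0; rewrite -hy y0 expr0n.
  have [j yj] := all_pow hq pz y0.
  have : Ep r x = 1.
    by rewrite -hy Ep_exp yj Ep_th // -exprM mulnC exprM -signr_odd /= expr1n.
  rewrite xm Ep_th // -signr_odd hm expr1 => /eqP; by rewrite (negbTE m1).
- case: existsP => // -[]; exists (th ^+ m./2).
  rewrite -exprM xm; have := odd_double_half m; rewrite hm add0n => {2}<-.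
  by rewrite -muln2.
Qed.

Lemma frobD (F : finFieldType) (r : nat) :
  (exists p k : nat, [/\ prime p, (0 < k)%N & r = (p ^ k)%N]) ->
  #|F| = (r ^ 2)%N -> forall x y : F, (x + y) ^+ r = x ^+ r + y ^+ r.
Proof.
move=> [p [k [pp k0 ->]]] hq x y; apply: exprDn_pchar.
have pc : p \in [pchar F] by apply: (@card_finPcharP _ p (k * 2)) => //; rewrite hq expnM.
by rewrite pnatX (pnatE _ pp) pc.
Qed.

Lemma frobN (F : finFieldType) (r : nat) (x : F) : odd r -> (- x) ^+ r = - x ^+ r.
Proof. by move=> hr; rewrite exprNn -signr_odd hr expr1 mulN1r. Qed.

Lemma frob_nat (F : finFieldType) (r : nat) :
  (exists p k : nat, [/\ prime p, (0 < k)%N & r = (p ^ k)%N]) ->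
  #|F| = (r ^ 2)%N -> forall m : nat, (m%:R : F) ^+ r = m%:R.
Proof.
move=> hp hq; elim=> [|m IH].
  rewrite expr0n; case: hp => [p [k [pp k0 ->]]].
  by rewrite expn_eq0 eqn0Ngt (prime_gt0 pp).
by rewrite -addn1 natrD (frobD hp hq) IH expr1n.
Qed.

Lemma E_lin (F : finFieldType) (r : nat) (x c : F) :
  (0 < r)%N -> x != 0 -> x ^+ r = c * x -> Ep r x = c ^+ ((r + 1) %/ 2).
Proof.
move=> r0 x0 h; rewrite /Ep exprM; congr (_ ^+ _).
apply: (mulIf x0); rewrite -h -exprSr; congr (_ ^+ _); lia.
Qed.

Lemma E_circ_sub (F : finFieldType) (r : nat) (u v : F) :
  odd r -> (forall x y : F, (x + y) ^+ r = x ^+ r + y ^+ r) ->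
  u != 0 -> v != 0 -> u ^+ r = u^-1 -> v ^+ r = v^-1 ->
  u ^+ ((r + 1) %/ 2) = 1 -> v ^+ ((r + 1) %/ 2) = 1 -> u - v != 0 ->
  Ep r (u - v) = (-1) ^+ ((r + 1) %/ 2).
Proof.
move=> hr fr u0 v0 hu hv hu2 hv2 uv0.
have r0 : (0 < r)%N by case: r hr {fr hu hv hu2 hv2}.
rewrite (E_lin (c := - (u * v)^-1) r0 uv0).
  by rewrite [LHS]exprNn exprVn exprMn hu2 hv2 mulr1 invr1 mulr1.
rewrite fr frobN // hu hv; field; by apply/andP.
Qed.

Lemma E_circ_add (F : finFieldType) (r : nat) (u v : F) :
  odd r -> (forall x y : F, (x + y) ^+ r = x ^+ r + y ^+ r) ->
  u != 0 -> v != 0 -> u ^+ r = u^-1 -> v ^+ r = v^-1 ->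
  u ^+ ((r + 1) %/ 2) = 1 -> v ^+ ((r + 1) %/ 2) = 1 -> u + v != 0 ->
  Ep r (u + v) = 1.
Proof.
move=> hr fr u0 v0 hu hv hu2 hv2 uv0.
have r0 : (0 < r)%N by case: r hr {fr hu hv hu2 hv2}.
rewrite (E_lin (c := (u * v)^-1) r0 uv0).
  by rewrite exprVn exprMn hu2 hv2 mulr1 invr1.
rewrite fr hu hv; field; by apply/andP.
Qed.

Lemma E_real (F : finFieldType) (r : nat) (u v : F) :
  odd r -> (forall x y : F, (x + y) ^+ r = x ^+ r + y ^+ r) ->
  u ^+ r = u -> v ^+ r = v -> u - v != 0 -> Ep r (u - v) = 1.
Proof.
move=> hr fr hu hv uv0.
have r0 : (0 < r)%N by case: r hr {fr hu hv}.
rewrite (E_lin (c := 1) r0 uv0) ?expr1n //.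
by rewrite fr frobN // hu hv mul1r.
Qed.

Lemma exprzn (F : finFieldType) (x : F) (i : int) (m : nat) : (x ^ i) ^+ m = (x ^+ m) ^ i.
Proof. by rewrite !exprnP exprzAC. Qed.

Lemma prim_int (F : finFieldType) (z : F) (D : nat) (x : int) :
  D.-primitive_root z -> z ^ x = 1 -> (D%:Z %| x)%Z.
Proof.
move=> pz; case: x => m /=.
  by rewrite -exprnP => /eqP; rewrite -(prim_order_dvd pz) dvdzE absz_nat.
rewrite NegzE -exprnN => /eqP; rewrite invr_eq1 => /eqP/eqP.
by rewrite -(prim_order_dvd pz) dvdzE abszN absz_nat.
Qed.

Lemma Ep_self (F : finFieldType) (r : nat) (f : nat) (x : F) :
  (exists p k : nat, [/\ prime p, (0 < k)%N & r = (p ^ k)%N]) ->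
  #|F| = (r ^ 2)%N -> (0 < r)%N ->
  (f%:R * x ^+ f.-1) != 0 -> Ep r x = 1 -> Ep r (f%:R * x ^+ f.-1) = 1.
Proof.
move=> hp hq r0; rewrite mulf_eq0 negb_or => /andP[f0 _] hx.
rewrite Ep_mul Ep_exp hx expr1n mulr1.
by rewrite (E_lin (c := 1) r0 f0) ?expr1n // (frob_nat hp hq) mul1r.
Qed.

Lemma LS_decomp (F : finFieldType) (J : finType) (C : J -> {set F}) (S : {set F}) b :
  S = \bigcup_j C j -> (forall j j', j != j' -> [disjoint C j & C j']) ->
  LS S b = \prod_j \prod_(c in C j | c != b) (b - c).
Proof.
move=> HS HD; rewrite /LS big_mkcondr HS partition_disjoint_bigcup //.
by apply: eq_bigr => j _; rewrite big_mkcondr.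
Qed.

Lemma prod_out (F : finFieldType) (C : {set F}) b :
  b \notin C -> \prod_(c in C | c != b) (b - c) = \prod_(c in C) (b - c).
Proof.
move=> hb; apply: eq_bigl => c; case: (boolP (c \in C)) => //= hc.
by apply/eqP => h; move: hb; rewrite -h hc.
Qed.

Lemma odd_half (r : nat) : odd r -> (r + 1 = 2 * ((r + 1) %/ 2))%N.
Proof. move=> hr; have := odd_double_half r; rewrite hr => hr2; lia. Qed.

Lemma one_lt_pp (r : nat) : (exists p k : nat, [/\ prime p, (0 < k)%N & r = (p ^ k)%N]) -> (1 < r)%N.
Proof.
case=> p [k [pp k0 ->]].
apply: (leq_trans (prime_gt1 pp)); rewrite -{1}(expn1 p) leq_pexp2l // prime_gt0 //.
Qed.
Lemma w_div (e1 e2 f1 P a b h n : nat) : n = (e1 * f1)%N -> e1 = (2 * P * (2 * a + 1))%N ->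
  e2 = (2 * P * b)%N -> (0 < P)%N -> (e1 %| e2 * (2 * h))%N -> (n %| e2 * f1 * h)%N.
Proof.
move=> hn h1 h2 P0 /dvdnP[K hK].
have E : (b * (2 * h) = K * (2 * a + 1))%N.
  apply/eqP; rewrite -(eqn_pmul2l (_ : 0 < 2 * P)%N); last by lia.
  by apply/eqP; rewrite -[RHS]mulnCA -h1 -hK h2 mulnA.
have Ko : odd K = false.
  have := congr1 odd E; rewrite !oddM andbF oddD oddM /= andbT => <-; by [].
have := odd_double_half K; rewrite Ko add0n => hK2.
apply/dvdnP; exists K./2; apply/eqP; rewrite -(eqn_pmul2l (_ : 0 < 2)%N) //.
apply/eqP; rewrite [RHS]mulnA [(2 * K./2)%N]mulnC muln2 hK2 hn.
have -> : (2 * (e2 * f1 * h) = e2 * (2 * h) * f1)%N by ring.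
rewrite hK; ring.
Qed.

Lemma v_div (e1 e2 f2 n r : nat) : n = (e2 * f2)%N -> e1 = (2 * (e1 %/ 2))%N ->
  (2 * e2 %| e1 * (r - 1))%N -> (n %| (e1 %/ 2) * f2 * (r - 1))%N.
Proof.
move=> hn h1 /dvdnP[K hK]; apply/dvdnP; exists K.
apply/eqP; rewrite -(eqn_pmul2l (_ : 0 < 2)%N) //; apply/eqP.
have -> : (2 * (e1 %/ 2 * f2 * (r - 1)) = (2 * (e1 %/ 2)) * (r - 1) * f2)%N by ring.
rewrite -h1 hK hn; ring.
Qed.

Lemma half_f1 (e1 f1 n N0 : nat) : n = (e1 * f1)%N -> e1 = (2 * (e1 %/ 2))%N ->
  n = (2 * N0)%N -> (e1 %/ 2 * f1 = N0)%N.
Proof.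
move=> hn h1 h2; apply/eqP; rewrite -(eqn_pmul2l (_ : 0 < 2)%N) //; apply/eqP.
by rewrite mulnA -h1 -hn h2.
Qed.

Lemma prim_int_eq (F : finFieldType) (z : F) (D : nat) (a b : int) :
  D.-primitive_root z -> z ^ a = z ^ b -> (D%:Z %| a - b)%Z.
Proof.
move=> pz hab; apply: (prim_int pz).
have z0 := prim_neq0 pz.
by rewrite expfzDr // -invr_expz hab mulfV // expfz_neq0.
Qed.

Theorem mainTheorem6 (F : finFieldType) (r : nat)
  (hr_pp : exists p k : nat, [/\ prime p, (0 < k)%N & r = (p ^ k)%N])
  (hr_odd : odd r)
  (hq : #|F| = (r ^ 2)%N)
  (theta : F) (htheta : ((r ^ 2).-1).-primitive_root theta)
  (e1 f1 e2 f2 : nat) (he1 : (0 < e1)%N) (hf1 : (0 < f1)%N)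
  (he2 : (0 < e2)%N) (hf2 : (0 < f2)%N)
  (hef1 : (r ^ 2).-1 = (e1 * f1)%N) (hef2 : (r ^ 2).-1 = (e2 * f2)%N)
  (l : nat) (hl : (2 <= l)%N)
  (he1l : (e1 %% 2 ^ l.+1 = 2 ^ l)%N) (he2l : (2 ^ l %| e2)%N)
  (hdiv1 : (2 * e2 %| e1 * (r - 1))%N) (hdiv2 : (e1 %| e2 * (r + 1))%N)
  (s t : nat)
  (hs : (1 <= s <= e1 %/ gcdn e1 e2)%N) (ht : (1 <= t <= e2 %/ gcdn e1 e2)%N)
  (i : 'I_s -> int) (j : 'I_t -> int)
  (hi : forall mu nu : 'I_s,
      (i mu = i nu %[mod (e1 %/ gcdn e1 e2)%N])%Z -> mu = nu)
  (hj : forall mu nu : 'I_t,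
      (j mu = j nu %[mod (e2 %/ gcdn e1 e2)%N])%Z -> mu = nu) :
  let A := cycF (theta ^+ e1) in
  let B := cycF (theta ^+ e2) in
  let beta := theta ^+ e2 in
  let gamma := theta ^+ (e1 %/ 2) in
  let M := \bigcup_(mu < s) cosetF (beta ^ i mu) A in
  let N := \bigcup_(nu < t) cosetF (gamma ^ (2 * j nu + 1)) B in
  let S := M :|: N in
  (forall b, b \in M -> eta (LS S b) = (-1) ^+ (((s - 1) * (r + 1)) %/ 2)%N) /\
  (forall b, b \in N -> eta (LS S b) = 1).
Proof.
move=> A B beta gamma M N S.
have pz := htheta.
have r1 : (1 < r)%N := one_lt_pp hr_pp.
have r0 : (0 < r)%N := ltnW r1.
have th0 : theta != 0 := prim_neq0 pz.
have fr := frobD hr_pp hq.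
set n := (r ^ 2).-1 in hef1 hef2 pz.
set h := ((r + 1) %/ 2)%N.
have hn : n = (2 * ((r - 1) * h))%N := n_half hr_odd.
have hh : (r + 1 = 2 * h)%N := odd_half hr_odd.
have qgt : (n < #|F|)%N.
  rewrite hq /n; have : (0 < r ^ 2)%N by rewrite expn_gt0 r0.
  by case: (r ^ 2)%N.
set N0 := ((r - 1) * h)%N.
have thN : theta ^+ N0 = -1 := Ep_nat_half hr_odd r1 htheta.
set P := (2 ^ l.-1)%N.
have P0 : (0 < P)%N by rewrite expn_gt0.
have Pe : (P = 2 * 2 ^ (l.-2))%N.
  by rewrite /P -expnS; congr (expn 2 _); case: l hl {he1l he2l P P0} => [|[|]].
have l2 : (2 ^ l = 2 * P)%N.
  by rewrite /P -expnS; congr (expn 2 _); case: l hl {he1l he2l P P0 Pe} => [|[|]].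
set a := (e1 %/ 2 ^ l.+1)%N.
have he1a : e1 = (2 * P * (2 * a + 1))%N.
  rewrite {1}(divn_eq e1 (2 ^ l.+1)) he1l -/a expnS l2; ring.
have [b he2b] : exists b, e2 = (2 * P * b)%N.
  by case/dvdnP: he2l => b' ->; exists b'; rewrite l2 mulnC.
have e12 : (e1 %/ 2 = P * (2 * a + 1))%N by rewrite he1a -mulnA mulKn.
have e1e : e1 = (2 * (e1 %/ 2))%N by rewrite e12 he1a mulnA.
set D1 := (e1 %/ gcdn e1 e2)%N.
set D2 := (e2 %/ gcdn e1 e2)%N.
set z1 := theta ^+ e1.
have pz1 : f1.-primitive_root z1.
  have hd : (f1 %| n)%N by rewrite hef1 dvdn_mull.
  by have := dvdn_prim_root pz hd; rewrite {1}hef1 mulnK.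
have pz2 : f2.-primitive_root beta.
  have hd : (f2 %| n)%N by rewrite hef2 dvdn_mull.
  by have := dvdn_prim_root pz hd; rewrite {1}hef2 mulnK.
set w := theta ^+ (e2 * f1).
have pw : D1.-primitive_root w.
  have := exp_prim_root pz (e2 * f1).
  by rewrite hef1 -muln_gcdl divnMr // gcdnC.
set u2 := theta ^+ (e1 * f2).
have pu2 : D2.-primitive_root u2.
  have := exp_prim_root pz (e1 * f2).
  by rewrite hef2 -muln_gcdl divnMr //.
set v2 := theta ^+ (e1 %/ 2 * f2).
have z10 : z1 != 0 := prim_neq0 pz1.
have beta0 : beta != 0 := prim_neq0 pz2.
have w0 : w != 0 := prim_neq0 pw.
have u20 : u2 != 0 := prim_neq0 pu2.
have gamma0 : gamma != 0 by rewrite expf_neq0.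
have v20 : v2 != 0 by rewrite expf_neq0.
have w_h : w ^+ h = 1.
  apply/eqP; rewrite -exprM -(prim_order_dvd pz).
  apply: (w_div hef1 he1a he2b P0); by rewrite -hh.
have w_r : w ^+ r = w^-1.
  have : w ^+ r * w = 1 by rewrite -exprSr -addn1 hh mulnC exprM w_h expr1n.
  by move=> H; rewrite -[w ^+ r]mulr1 -(mulfV w0) mulrA H mul1r.
have v2_r : v2 ^+ r = v2.
  have : v2 ^+ (r - 1) = 1.
    apply/eqP; rewrite -exprM -(prim_order_dvd pz).
    exact: (v_div hef2 e1e hdiv1).
  by move=> H; rewrite -(subnK r0) exprD H mul1r expr1.
have u2v2 : u2 = v2 ^+ 2 by rewrite -exprM /u2 {1}e1e; congr (_ ^+ _); ring.
have u2_r : u2 ^+ r = u2 by rewrite u2v2 exprAC v2_r.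
have gam2 : gamma ^+ 2 = z1 by rewrite -exprM /z1 {2}e1e mulnC.
have gam_f1 : gamma ^+ f1 = -1.
  by rewrite -exprM (half_f1 hef1 e1e hn).
have gam_f2 : gamma ^+ f2 = v2 by rewrite -exprM.
have z1_f1 : z1 ^+ f1 = 1 := prim_expr_order pz1.
have beta_f2 : beta ^+ f2 = 1 := prim_expr_order pz2.
have beta_f1 : beta ^+ f1 = w by rewrite -exprM.
have z1_f2 : z1 ^+ f2 = u2 by rewrite -exprM.
have m1 : (-1 : F) != 1 := neg1_neq1 hr_odd r1 pz.
have E_beta : Ep r beta = 1.
  by rewrite /beta (Ep_th _ hr_odd r1 pz) he2b -signr_odd !oddM.
have E_gamma : Ep r gamma = 1.
  by rewrite /gamma (Ep_th _ hr_odd r1 pz) e12 Pe -signr_odd !oddM.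
have E_z1 : Ep r z1 = 1.
  by rewrite /z1 (Ep_th _ hr_odd r1 pz) he1a -signr_odd !oddM.
have E_m1 : Ep r (-1 : F) = 1.
  have or1 : odd (r - 1) = false.
    by move: hr_odd; rewrite -{1}(subnK r0) addn1 /= => /negbTE.
  by rewrite /Ep -signr_odd oddM or1.
(* the character separating M from N *)
set T := (b * f2)%N.
have PbN : (P * b * f2 = N0)%N.
  apply/eqP; rewrite -(eqn_pmul2l (_ : 0 < 2)%N) //.
  by rewrite !mulnA -he2b -hef2 hn mulnA.
have beta_T : beta ^+ T = 1.
  by rewrite /beta -exprM mulnCA -hef2 mulnC exprM (prim_expr_order pz) expr1n.
have z1_T : z1 ^+ T = 1.
  have hT : (e1 * T = (2 * a + 1) * n)%N by rewrite /T hef2 he1a he2b; ring.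
  by rewrite /z1 -exprM hT mulnC exprM (prim_expr_order pz) expr1n.
have gam_T : gamma ^+ T = -1.
  rewrite /gamma -exprM e12 (_ : (P * (2 * a + 1) * T = (2 * a + 1) * N0)%N).
    by rewrite mulnC exprM thN -signr_odd oddD oddM /= expr1.
  by rewrite /T -PbN; ring.
have f1q : (f1 <= #|F|)%N.
  apply: ltnW; apply: leq_ltn_trans qgt; rewrite hef1 leq_pmull //.
have f2q : (f2 <= #|F|)%N.
  apply: ltnW; apply: leq_ltn_trans qgt; rewrite hef2 leq_pmull //.
pose CMe (mu : 'I_s) := [set beta ^ i mu * z1 ^+ (nat_of_ord k) | k : 'I_f1].
pose CNe (nu : 'I_t) := [set (gamma * z1 ^ j nu) * beta ^+ (nat_of_ord k) | k : 'I_f2].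
have hM : M = \bigcup_(mu < s) CMe mu.
  by apply: eq_bigr => mu _; rewrite /A (coset_enum _ pz1).
have hgj : forall nu, gamma ^ (2 * j nu + 1) = gamma * z1 ^ j nu.
  move=> nu; rewrite expfzDr // -exprz_exp -exprnP gam2 expr1z mulrC //.
have hN : N = \bigcup_(nu < t) CNe nu.
  by apply: eq_bigr => nu _; rewrite /B (coset_enum _ pz2) // hgj.
pose C (x : 'I_s + 'I_t) := match x with inl mu => CMe mu | inr nu => CNe nu end.
have hS : S = \bigcup_x C x by rewrite /S hM hN big_sumType.
have powM1 : forall mu (k : nat), (beta ^ i mu * z1 ^+ k) ^+ f1 = w ^ i mu.
  by move=> mu k; rewrite exprMn exprzn beta_f1 exprAC z1_f1 expr1n mulr1.
have powM2 : forall mu (k : nat), (beta ^ i mu * z1 ^+ k) ^+ f2 = u2 ^+ k.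
  by move=> mu k; rewrite exprMn exprzn beta_f2 exp1rz mul1r exprAC z1_f2.
have powMT : forall mu (k : nat), (beta ^ i mu * z1 ^+ k) ^+ T = 1.
  by move=> mu k; rewrite exprMn exprzn beta_T exp1rz mul1r exprAC z1_T expr1n.
have powN1 : forall nu (k : nat), (gamma * z1 ^ j nu * beta ^+ k) ^+ f1 = - w ^+ k.
  move=> nu k; rewrite !exprMn exprzn gam_f1 z1_f1 exp1rz mulr1 exprAC beta_f1.
  by rewrite mulN1r.
have powN2 : forall nu (k : nat), (gamma * z1 ^ j nu * beta ^+ k) ^+ f2 = v2 * u2 ^ j nu.
  by move=> nu k; rewrite !exprMn exprzn gam_f2 z1_f2 exprAC beta_f2 expr1n mulr1.
have powNT : forall nu (k : nat), (gamma * z1 ^ j nu * beta ^+ k) ^+ T = -1.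
  by move=> nu k; rewrite !exprMn exprzn gam_T z1_T exp1rz mulr1 exprAC beta_T expr1n mulr1.
have hD : forall x x', x != x' -> [disjoint C x & C x'].
  move=> [mu|nu] [mu'|nu'] hne; rewrite disjoint_subset; apply/subsetP => c /imsetP[k _ ->];
  rewrite inE; apply/negP => /imsetP[k' _ hc].
  - have emu : mu = mu'.
      have := congr1 (fun x => x ^+ f1) hc; rewrite /= !powM1 => /(prim_int_eq pw) hd.
      by apply: hi; apply/eqP; rewrite eqz_mod_dvd.
    by move: hne; rewrite emu eqxx.
  - have := congr1 (fun x => x ^+ T) hc; rewrite /= powMT powNT => /eqP.
    by rewrite eq_sym (negbTE m1).
  - have := congr1 (fun x => x ^+ T) hc; rewrite /= powMT powNT => /eqP.
    by rewrite (negbTE m1).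
  - have enu : nu = nu'.
      have := congr1 (fun x => x ^+ f2) hc; rewrite /= !powN2 => /(mulfI v20).
      move=> /(prim_int_eq pu2) hd.
      by apply: hj; apply/eqP; rewrite eqz_mod_dvd.
    by move: hne; rewrite enu eqxx.
pose PP b x := \prod_(c in C x | c != b) (b - c).
have LSd : forall b, LS S b = \prod_x PP b x := fun b => LS_decomp b hS hD.
have LS0 : forall b, LS S b != 0.
  move=> b0; rewrite /LS; apply/prodf_neq0 => c /andP[_ hcb].
  by rewrite subr_eq0 eq_sym.
have PP0 : forall b x, PP b x != 0.
  by move=> b0 x; have := LS0 b0; rewrite LSd => /prodf_neq0; apply.
have ELS : forall b, Ep r (LS S b) =
    (\prod_mu Ep r (PP b (inl mu))) * (\prod_nu Ep r (PP b (inr nu))).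
  move=> b0; rewrite LSd (big_morph (Ep r) (Ep_mul r) (expr1n _ _)).
  by rewrite big_sumType.
have wr : forall x : int, (w ^ x) ^+ r = (w ^ x)^-1.
  by move=> x; rewrite exprzn w_r exprz_inv invr_expz.
have wh : forall x : int, (w ^ x) ^+ h = 1.
  by move=> x; rewrite exprzn w_h exp1rz.
have wrn : forall x : nat, (w ^+ x) ^+ r = (w ^+ x)^-1.
  by move=> x; rewrite exprAC w_r exprVn.
have whn : forall x : nat, (w ^+ x) ^+ h = 1.
  by move=> x; rewrite exprAC w_h expr1n.
have yM1 : forall mu, (beta ^ i mu) ^+ f1 = w ^ i mu by move=> mu; rewrite exprzn beta_f1.
have yN2 : forall nu, (gamma * z1 ^ j nu) ^+ f2 = v2 * u2 ^ j nu.
  by move=> nu; rewrite exprMn exprzn gam_f2 z1_f2.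
have yN1 : forall nu, (gamma * z1 ^ j nu) ^+ f1 = -1.
  by move=> nu; rewrite exprMn exprzn gam_f1 z1_f1 exp1rz mulr1.
have yM0 : forall mu, beta ^ i mu != 0 by move=> mu; rewrite expfz_neq0.
have yN0 : forall nu, gamma * z1 ^ j nu != 0 by move=> nu; rewrite mulf_neq0 // expfz_neq0.
have ru2 : forall x : nat, (u2 ^+ x) ^+ r = u2 ^+ x by move=> x; rewrite exprAC u2_r.
have rvu : forall x : int, (v2 * u2 ^ x) ^+ r = v2 * u2 ^ x.
  by move=> x; rewrite exprMn v2_r exprzn u2_r.
have notin : forall b x x', b \in C x -> x != x' -> b \notin C x'.
  move=> b0 x x' hb hne; apply/negP => hb'.
  by have := hD _ _ hne; rewrite disjoint_subset => /subsetP/(_ _ hb); rewrite inE hb'.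
split.
- move=> b0; rewrite hM => /bigcupP[mu0 _ hb0].
  have hb1 : b0 \in C (inl mu0) by [].
  case/imsetP: (hb0) => k0 _ eb.
  have Eb : Ep r b0 = 1.
    by rewrite eb Ep_mul Ep_expz E_beta exp1rz Ep_exp E_z1 expr1n mulr1.
  rewrite (eta_of_E (K := (h * (s.-1))%N) hr_odd r1 hq pz (LS0 b0)); last first.
    rewrite ELS.
    rewrite [X in _ * X]big1 ?mulr1; last first.
      move=> nu _; have nin := notin _ _ (inr nu) hb1 isT.
      have := PP0 b0 (inr nu); rewrite /PP /= (prod_out nin) (coset_prod _ pz2) // yN2.
      rewrite eb powM2 => nz; exact: (E_real hr_odd fr (ru2 _) (rvu _) nz).
    rewrite (bigD1_ord mu0) //= (_ : Ep r (PP b0 (inl mu0)) = 1); last first.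
      have := PP0 b0 (inl mu0); rewrite /PP /= (coset_self pz1 (yM0 mu0) hb0) => nz.
      exact: (Ep_self hr_pp hq r0 nz Eb).
    rewrite mul1r exprM.
    transitivity (\prod_(mu < s.-1) ((-1 : F) ^+ h)); last by rewrite prodr_const card_ord.
    apply: eq_bigr => mu _.
    have hne : inl mu0 != inl (lift mu0 mu) :> 'I_s + 'I_t.
      by apply/negP => /eqP [] /eqP; rewrite (negbTE (neq_lift mu0 mu)).
    have nin := notin _ _ _ hb1 hne.
    have := PP0 b0 (inl (lift mu0 mu)); rewrite /PP /= (prod_out nin) (coset_prod _ pz1) //.
    rewrite yM1 eb powM1 => nz.
    by apply: (E_circ_sub hr_odd fr _ _ (wr _) (wr _) (wh _) (wh _) nz); rewrite expfz_neq0.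
  by congr (_ ^+ _); rewrite subn1 hh mulnCA mulKn // mulnC.
- move=> b0; rewrite hN => /bigcupP[nu0 _ hb0].
  have hb1 : b0 \in C (inr nu0) by [].
  case/imsetP: (hb0) => k0 _ eb.
  have Eb : Ep r b0 = 1.
    by rewrite eb !Ep_mul E_gamma Ep_expz E_z1 exp1rz Ep_exp E_beta expr1n !mulr1.
  rewrite (eta_of_E (K := 0%N) hr_odd r1 hq pz (LS0 b0)) //.
  rewrite ELS big1 ?mul1r; last first.
    move=> mu _; have nin := notin _ _ (inl mu) hb1 isT.
    have := PP0 b0 (inl mu); rewrite /PP /= (prod_out nin) (coset_prod _ pz1) // yM1.
    rewrite eb powN1 -opprD => nz.
    rewrite -mulN1r Ep_mul E_m1 mul1r.
    rewrite oppr_eq0 in nz.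
    by apply: (E_circ_add hr_odd fr _ _ (wrn _) (wr _) (whn _) (wh _) nz); rewrite ?expf_neq0 ?expfz_neq0.
  rewrite (bigD1_ord nu0) //= (_ : Ep r (PP b0 (inr nu0)) = 1); last first.
    have := PP0 b0 (inr nu0); rewrite /PP /= (coset_self pz2 (yN0 nu0) hb0) => nz.
    exact: (Ep_self hr_pp hq r0 nz Eb).
  rewrite mul1r big1 // => nu _.
  have hne : inr nu0 != inr (lift nu0 nu) :> 'I_s + 'I_t.
    by apply/negP => /eqP [] /eqP; rewrite (negbTE (neq_lift nu0 nu)).
  have nin := notin _ _ _ hb1 hne.
  have := PP0 b0 (inr (lift nu0 nu)); rewrite /PP /= (prod_out nin) (coset_prod _ pz2) //.
  rewrite yN2 eb powN2 => nz.
  exact: (E_real hr_odd fr (rvu _) (rvu _) nz).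
Qed.
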